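(* Let $\Omega \subset \mathbb{R}^2$ be open, bounded with $|\Omega| = 1$, and let $\Omega = \bigcup_{i=1}^N \Omega_i$ be a partition into pairwise disjoint measurable sets of positive measure. Define $\eta_0 > 0$ by $\pi\eta_0^2 = \min_{1 \le i \le N}|\Omega_i|$. For each $i$ let $B_i$ be a disk with $|B_i| = |\Omega_i|$ and $|\Omega_i \triangle B_i| = |\Omega_i|\mathcal{A}(\Omega_i)$. Let $c_1 > 0$, $d_2 \ge 0$ and assume $\sum_{i=1}^N \frac{|\Omega_i|}{|\Omega|} D(\Omega_i) \le d_2$. Let $I = \{ i \in \{1,\dots,N\} : |\Omega_i| \ge (1+c_1)\pi\eta_0^2\}$. Then $$\left|\left\{x \in \Omega : \Big\| x - \bigcup_{i \in I} B_i\Big\| \le 2\eta_0\right\}\right| \le \frac{9d_2}{c_1} + 9d_2.$$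
   Context: $|\cdot|$ is Lebesgue measure and $\triangle$ is symmetric difference. For $x \in \mathbb{R}^2$ and $A \subset \mathbb{R}^2$, $\|x - A\| := \inf_{y\in A}\|x-y\|$. Fraenkel asymmetry: $\mathcal{A}(E) := \inf_B \frac{|E\triangle B|}{|E|}$ over disks $B$ with $|B| = |E|$ (the infimum is attained). $D(\Omega_i) := \frac{|\Omega_i| - \min_{1\le j\le N}|\Omega_j|}{|\Omega_i|}$. *)

(* Defs.v *)
From Stdlib Require Import Reals Lra.
Open Scope R_scope.

Definition pt := (R * R)%type.
Definition pset := pt -> Prop.

Definition dist (p q : pt) : R :=
  sqrt ((fst p - fst q) ^ 2 + (snd p - snd q) ^ 2).

Record rect := Rect { rx1 : R; rx2 : R; ry1 : R; ry2 : R }.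
Definition in_rect (p : pt) (r : rect) : Prop :=
  rx1 r <= fst p <= rx2 r /\ ry1 r <= snd p <= ry2 r.
Definition area (r : rect) : R :=
  Rmax 0 (rx2 r - rx1 r) * Rmax 0 (ry2 r - ry1 r).

Definition covers (A : pset) (f : nat -> rect) : Prop :=
  forall p, A p -> exists n, in_rect p (f n).

Definition cover_value (A : pset) (s : R) : Prop :=
  exists f : nat -> rect, covers A f /\ infinite_sum (fun n => area (f n)) s.

Definition outer_measure (A : pset) (m : R) : Prop :=
  (forall s, cover_value A s -> m <= s) /\
  (forall eps, eps > 0 -> exists s, cover_value A s /\ s < m + eps).

(* Caratheodory measurability (tested on sets of finite outer measure,
   which is equivalent since sets of infinite outer measure satisfy the
   criterion trivially). *)
Definition measurable (E : pset) : Prop :=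
  forall (T : pset) (m : R), outer_measure T m ->
    exists a b, outer_measure (fun p => T p /\ E p) a /\
                outer_measure (fun p => T p /\ ~ E p) b /\ a + b = m.

Definition symdiff (A B : pset) : pset :=
  fun p => (A p /\ ~ B p) \/ (B p /\ ~ A p).

Definition disk (c : pt) (r : R) : pset := fun p => dist p c < r.
Definition is_disk (B : pset) : Prop :=
  exists c r, r > 0 /\ forall p, B p <-> disk c r p.

Definition fraenkel_asymmetry (E : pset) (a : R) : Prop :=
  exists mE, outer_measure E mE /\
  (forall B mB mD, is_disk B -> outer_measure B mB -> mB = mE ->
      outer_measure (symdiff E B) mD -> a <= mD / mE) /\
  (forall eps, eps > 0 -> exists B mD, is_disk B /\ outer_measure B mE /\
      outer_measure (symdiff E B) mD /\ mD / mE < a + eps).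

Definition is_open (O : pset) : Prop :=
  forall p, O p -> exists r, r > 0 /\ forall q, dist q p < r -> O q.

Definition is_bounded (O : pset) : Prop :=
  exists M, forall p, O p -> dist p (0, 0) <= M.

(* ||x - U|| <= r, i.e. inf_{y in U} |x - y| <= r (false if U is empty) *)
Definition dist_set_le (x : pt) (U : pset) (r : R) : Prop :=
  forall eps, eps > 0 -> exists y, U y /\ dist x y < r + eps.

Fixpoint rsum (n : nat) (f : nat -> R) : R :=
  match n with
  | O => 0
  | S k => rsum k f + f k
  end.

(* Main.v *)
Require Import Defs.
From Stdlib Require Import Reals.
From Stdlib Require Import Lra Lia Classical.
Open Scope R_scope.

Lemma sqrt_lt_sq A r : 0 <= A -> sqrt A < r -> A < r ^ 2.
Proof. intros HA H. rewrite <- (pow2_sqrt A HA). pose proof (sqrt_pos A). nra. Qed.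

Lemma sqrt_le_of_sq A r : 0 <= r -> A <= r ^ 2 -> sqrt A <= r.
Proof. intros Hr H. rewrite <- (sqrt_pow2 r Hr). apply sqrt_le_1_alt. exact H. Qed.

Lemma dist_triangle p q r : Defs.dist p r <= Defs.dist p q + Defs.dist q r.
Proof.
  unfold Defs.dist. destruct p as [p1 p2], q as [q1 q2], r as [r1 r2]; cbn [fst snd].
  set (a := p1 - q1). set (b := p2 - q2). set (c := q1 - r1). set (d := q2 - r2).
  replace (p1 - r1) with (a + c) by (unfold a, c; ring).
  replace (p2 - r2) with (b + d) by (unfold b, d; ring).
  pose proof (sqrt_cauchy a b c d) as Hc. unfold Rsqr in Hc.
  pose proof (sqrt_pos (a^2+b^2)). pose proof (sqrt_pos (c^2+d^2)).
  apply sqrt_le_of_sq; [lra|].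
  pose proof (pow2_sqrt (a^2+b^2) ltac:(pose proof (pow2_ge_0 a); pose proof (pow2_ge_0 b); lra)).
  pose proof (pow2_sqrt (c^2+d^2) ltac:(pose proof (pow2_ge_0 c); pose proof (pow2_ge_0 d); lra)).
  replace (a*a+b*b) with (a^2+b^2) in Hc by ring.
  replace (c*c+d*d) with (c^2+d^2) in Hc by ring.
  nra.
Qed.

Lemma sqrt_scale k a b : 0 < k -> sqrt ((k*a)^2 + (k*b)^2) = k * sqrt (a^2+b^2).
Proof.
  intros Hk. replace ((k*a)^2 + (k*b)^2) with (k^2 * (a^2+b^2)) by ring.
  rewrite sqrt_mult_alt by nra. rewrite sqrt_pow2 by lra. reflexivity.
Qed.

Lemma rsum_ext n f g : (forall k, (k < n)%nat -> f k = g k) -> rsum n f = rsum n g.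
Proof. induction n; simpl; intros H; [reflexivity|]. rewrite IHn by (intros; apply H; lia). rewrite H by lia. reflexivity. Qed.
Lemma rsum_le n f g : (forall k, (k < n)%nat -> f k <= g k) -> rsum n f <= rsum n g.
Proof. induction n; simpl; intros H; [lra|]. pose proof (IHn ltac:(intros; apply H; lia)). pose proof (H n ltac:(lia)). lra. Qed.
Lemma rsum_plus n f g : rsum n (fun k => f k + g k) = rsum n f + rsum n g.
Proof. induction n; simpl; [lra|]. rewrite IHn. ring. Qed.
Lemma rsum_scal n a f : rsum n (fun k => a * f k) = a * rsum n f.
Proof. induction n; simpl; [lra|]. rewrite IHn. ring. Qed.
Lemma rsum_const n a : rsum n (fun _ => a) = INR n * a.
Proof. induction n; simpl rsum; [simpl; lra|]. rewrite IHn, S_INR. ring. Qed.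
Lemma rsum_shift n f : rsum (S n) f = f 0%nat + rsum n (fun k => f (S k)).
Proof. induction n; [simpl; lra|]. change (rsum (S (S n)) f) with (rsum (S n) f + f (S n)). rewrite IHn. simpl. ring. Qed.
Lemma rsum_rev n f : rsum n f = rsum n (fun k => f (n - 1 - k)%nat).
Proof.
  induction n; [reflexivity|].
  transitivity (rsum n f + f n); [reflexivity|]. rewrite rsum_shift. rewrite IHn.
  replace (S n - 1 - 0)%nat with n by lia.
  rewrite (rsum_ext n (fun k => f (S n - 1 - S k)%nat) (fun k => f (n - 1 - k)%nat))
    by (intros; f_equal; lia). ring.
Qed.
Lemma rsum_nonneg n f : (forall k, (k < n)%nat -> 0 <= f k) -> 0 <= rsum n f.
Proof. intros H. pose proof (rsum_le n (fun _ => 0) f H). rewrite rsum_const in H0. lra. Qed.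

Definition Zr := Rect 0 0 0 0.
Lemma area_nonneg r : 0 <= area r.
Proof. unfold area. pose proof (Rmax_l 0 (rx2 r - rx1 r)). pose proof (Rmax_l 0 (ry2 r - ry1 r)). nra. Qed.
Lemma area_Zr : area Zr = 0.
Proof. unfold area, Zr; simpl. unfold Rmax. destruct (Rle_dec 0 (0-0)); lra. Qed.

Lemma Un_cv_const c : Un_cv (fun _ => c) c.
Proof. intros eps He. exists 0%nat. intros. rewrite Rdist_eq. lra. Qed.

Lemma cover_value_mono A B s : (forall p, A p -> B p) -> cover_value B s -> cover_value A s.
Proof. intros H [f [Hc Hs]]. exists f. split; auto. intros p Hp. apply Hc, H, Hp. Qed.

Lemma cover_value_nonneg A s : cover_value A s -> 0 <= s.
Proof.
  intros [f [_ Hs]]. apply Rle_cv_lim with (Un := fun _ => 0) (Vn := sum_f_R0 (fun n => area (f n))).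
  - intros n. apply cond_pos_sum. intros; apply area_nonneg.
  - apply Un_cv_const.
  - exact Hs.
Qed.

Lemma cover_value_rect r : cover_value (fun p => in_rect p r) (area r).
Proof.
  exists (fun n => match n with O => r | S _ => Zr end). split.
  - intros p Hp. exists 0%nat. exact Hp.
  - assert (Hs : forall n, sum_f_R0 (fun n => area (match n with O => r | S _ => Zr end)) n = area r).
    { induction n; [reflexivity|]. rewrite tech5, IHn, area_Zr. ring. }
    intros eps He. exists 0%nat. intros n _. rewrite Hs, Rdist_eq. lra.
Qed.

Lemma cover_value_empty : cover_value (fun _ => False) 0.
Proof. rewrite <- area_Zr. eapply cover_value_mono; [|apply cover_value_rect]. intros p []. Qed.

Definition inter (f h : nat -> R) (n : nat) : R :=
  if Nat.even n then f (Nat.div2 n) else h (Nat.div2 n).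
Lemma inter_even f h n : inter f h (2 * n) = f n.
Proof. unfold inter. rewrite Nat.even_mul, Nat.div2_double. reflexivity. Qed.
Lemma inter_odd f h n : inter f h (S (2 * n)) = h n.
Proof. unfold inter. rewrite Nat.even_succ, Nat.odd_mul, Nat.div2_succ_double. reflexivity. Qed.

Lemma inter_sum f h n : sum_f_R0 (inter f h) (S (2 * n)) = sum_f_R0 f n + sum_f_R0 h n.
Proof.
  induction n.
  - simpl. unfold inter; simpl. reflexivity.
  - replace (S (2 * S n)) with (S (S (S (2 * n)))) by lia.
    rewrite tech5, tech5, IHn.
    replace (S (S (2 * n))) with (2 * S n)%nat by lia.
    rewrite inter_even. replace (S (2 * S n)) with (S (2 * (S n))) by lia. rewrite inter_odd.
    rewrite (tech5 f), (tech5 h). ring.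
Qed.

Lemma inter_sum_even f h n : sum_f_R0 (inter f h) (2 * S n) = sum_f_R0 f (S n) + sum_f_R0 h n.
Proof.
  replace (2 * S n)%nat with (S (S (2 * n))) by lia. rewrite tech5, inter_sum.
  replace (S (S (2 * n))) with (2 * S n)%nat by lia. rewrite inter_even, (tech5 f). ring.
Qed.

Lemma inter_cv f h s t : infinite_sum f s -> infinite_sum h t -> infinite_sum (inter f h) (s + t).
Proof.
  intros Hf Hh eps He.
  destruct (Hf (eps/2) ltac:(lra)) as [N1 H1].
  destruct (Hh (eps/2) ltac:(lra)) as [N2 H2].
  exists (2 * (N1 + N2) + 2)%nat. intros k Hk.
  destruct (Nat.Even_or_Odd k) as [[n Hn]|[n Hn]]; subst k.
  - destruct n as [|n]; [lia|]. rewrite inter_sum_even.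
    pose proof (H1 (S n) ltac:(lia)). pose proof (H2 n ltac:(lia)). unfold Rdist in *.
    replace (sum_f_R0 f (S n) + sum_f_R0 h n - (s + t)) with ((sum_f_R0 f (S n) - s) + (sum_f_R0 h n - t)) by ring.
    pose proof (Rabs_triang (sum_f_R0 f (S n) - s) (sum_f_R0 h n - t)). lra.
  - replace (2 * n + 1)%nat with (S (2 * n)) by lia. rewrite inter_sum.
    pose proof (H1 n ltac:(lia)). pose proof (H2 n ltac:(lia)). unfold Rdist in *.
    replace (sum_f_R0 f n + sum_f_R0 h n - (s + t)) with ((sum_f_R0 f n - s) + (sum_f_R0 h n - t)) by ring.
    pose proof (Rabs_triang (sum_f_R0 f n - s) (sum_f_R0 h n - t)). lra.
Qed.

Lemma cover_value_union A B s t : cover_value A s -> cover_value B t ->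
  cover_value (fun p => A p \/ B p) (s + t).
Proof.
  intros [f [Hf Hfs]] [g [Hg Hgs]].
  exists (fun n => if Nat.even n then f (Nat.div2 n) else g (Nat.div2 n)). split.
  - intros p [Hp|Hp].
    + destruct (Hf p Hp) as [n Hn]. exists (2 * n)%nat.
      rewrite Nat.even_mul, Nat.div2_double. exact Hn.
    + destruct (Hg p Hp) as [n Hn]. exists (S (2 * n))%nat.
      rewrite Nat.even_succ, Nat.odd_mul, Nat.div2_succ_double. exact Hn.
  - pose proof (inter_cv _ _ _ _ Hfs Hgs) as H.
    intros eps He. destruct (H eps He) as [N HN]. exists N. intros n Hn.
    rewrite (sum_eq _ (inter (fun n => area (f n)) (fun n => area (g n)))).
    + apply HN, Hn.
    + intros i _. unfold inter. destruct (Nat.even i); reflexivity.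
Qed.

Definition srect (c : pt) (k : R) (r : rect) : rect :=
  Rect (fst c + k * (rx1 r - fst c)) (fst c + k * (rx2 r - fst c))
       (snd c + k * (ry1 r - snd c)) (snd c + k * (ry2 r - snd c)).

Lemma Rmax0_scale k w : 0 < k -> Rmax 0 (k * w) = k * Rmax 0 w.
Proof. intros Hk. unfold Rmax. destruct (Rle_dec 0 (k*w)), (Rle_dec 0 w); nra. Qed.

Lemma area_srect c k r : 0 < k -> area (srect c k r) = k ^ 2 * area r.
Proof.
  intros Hk. unfold area, srect; simpl.
  replace (fst c + k * (rx2 r - fst c) - (fst c + k * (rx1 r - fst c))) with (k * (rx2 r - rx1 r)) by ring.
  replace (snd c + k * (ry2 r - snd c) - (snd c + k * (ry1 r - snd c))) with (k * (ry2 r - ry1 r)) by ring.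
  rewrite !Rmax0_scale by exact Hk. ring.
Qed.

Lemma cover_value_scale c rho k v : 0 < k -> cover_value (disk c rho) v ->
  cover_value (disk c (k * rho)) (k ^ 2 * v).
Proof.
  intros Hk [f [Hc Hs]]. exists (fun n => srect c k (f n)). split.
  - intros p Hp. unfold disk in Hp.
    set (q := (fst c + (fst p - fst c) / k, snd c + (snd p - snd c) / k)).
    assert (Hd : Defs.dist p c = k * Defs.dist q c).
    { unfold Defs.dist, q; cbn [fst snd].
      replace (fst c + (fst p - fst c) / k - fst c) with ((fst p - fst c) / k) by (field; lra).
      replace (snd c + (snd p - snd c) / k - snd c) with ((snd p - snd c) / k) by (field; lra).
      rewrite <- sqrt_scale by exact Hk. f_equal. field. lra. }
    assert (Hq : disk c rho q). { unfold disk. nra. }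
    destruct (Hc q Hq) as [n Hn]. exists n. unfold in_rect, srect in *; cbn [fst snd rx1 rx2 ry1 ry2] in *.
    unfold q in Hn; cbn [fst snd] in Hn.
    assert (E1 : fst p = fst c + k * ((fst p - fst c) / k)) by (field; lra).
    assert (E2 : snd p = snd c + k * ((snd p - snd c) / k)) by (field; lra).
    set (u := (fst p - fst c) / k) in *. set (w := (snd p - snd c) / k) in *.
    rewrite E1, E2. destruct Hn as [[A1 A2] [A3 A4]]. repeat split; nra.
  - intros eps He.
    pose proof (CV_mult (fun _ => k ^ 2) (sum_f_R0 (fun n => area (f n))) (k^2) v (Un_cv_const _) Hs) as H.
    destruct (H eps He) as [N HN]. exists N. intros n Hn.
    rewrite (sum_eq _ (fun i => area (f i) * k ^ 2)) by (intros; apply Rmult_comm || (rewrite area_srect; [ring|lra])).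
    rewrite <- scal_sum. apply HN, Hn.
Qed.

Lemma om_exists A s0 : cover_value A s0 -> exists m, outer_measure A m.
Proof.
  intros H0.
  destruct (completeness (fun x => cover_value A (- x))) as [l [Hub Hl]].
  - exists 0. intros x Hx. apply cover_value_nonneg in Hx. lra.
  - exists (- s0). rewrite Ropp_involutive. exact H0.
  - exists (- l). split.
    + intros s Hs. assert (- s <= l). { apply Hub. rewrite Ropp_involutive. exact Hs. } lra.
    + intros eps He. apply NNPP. intros Hn.
      assert (l <= l - eps); [|lra].
      apply Hl. intros x Hx. apply NNPP. intros Hx2. apply Hn. exists (- x). split; [exact Hx|lra].
Qed.

Lemma om_le A m s : outer_measure A m -> cover_value A s -> m <= s.
Proof. intros [H _] Hs. apply H, Hs. Qed.

Lemma find_step (s : nat -> R) x n : s 0%nat <= x -> x < s n ->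
  exists k, (k < n)%nat /\ s k <= x <= s (S k).
Proof.
  intros H0. induction n; intros Hn; [lra|].
  destruct (Rlt_dec x (s n)) as [Hl|Hl].
  - destruct (IHn Hl) as [k [Hk Hs]]. exists k. split; [lia|exact Hs].
  - exists n. split; [lia|lra].
Qed.

Lemma cover_value_family n (P M : nat -> rect) :
  cover_value (fun p => exists k, (k < n)%nat /\ (in_rect p (P k) \/ in_rect p (M k)))
              (rsum n (fun k => area (P k) + area (M k))).
Proof.
  induction n.
  - eapply cover_value_mono; [|apply cover_value_empty]. intros p [k [Hk _]]. lia.
  - simpl rsum. rewrite <- Rplus_assoc.
    eapply cover_value_mono; [|apply cover_value_union; [apply cover_value_union; [exact IHn|apply (cover_value_rect (P n))]|apply (cover_value_rect (M n))]].
    intros p [k [Hk Hp]]. destruct (Nat.eq_dec k n) as [->|Hne].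
    + destruct Hp; auto.
    + left. left. exists k. split; [lia|exact Hp].
Qed.

Lemma trig_key a h : 0 <= a <= PI/2 -> 0 <= h -> cos a * (sin (a + h) - sin a) <= sin h * cos a ^ 2.
Proof.
  intros Ha Hh. rewrite sin_plus.
  assert (0 <= sin a) by (apply sin_ge_0; lra).
  assert (0 <= cos a) by (apply cos_ge_0; lra).
  pose proof (COS_bound h).
  assert (cos a * sin a * (cos h - 1) <= 0).
  { assert (0 <= cos a * sin a) by nra. nra. }
  nra.
Qed.

Section DiskCover.
Variable n : nat.
Hypothesis Hn : (1 <= n)%nat.
Definition hh := PI / (2 * INR n).
Definition th (k : nat) := INR k * hh.

Lemma INRn_pos : 0 < INR n.
Proof. apply lt_0_INR. lia. Qed.
Lemma hh_pos : 0 < hh.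
Proof. unfold hh. pose proof INRn_pos. pose proof PI_RGT_0. apply Rdiv_lt_0_compat; lra. Qed.
Lemma hh_le : hh <= PI / 2.
Proof.
  assert (E : hh * (2 * INR n) = PI) by (unfold hh; pose proof INRn_pos; field; lra).
  assert (1 <= INR n) by (apply (le_INR 1); lia). pose proof hh_pos. nra.
Qed.
Lemma th_n : th n = PI / 2.
Proof. unfold th, hh. pose proof INRn_pos. field. lra. Qed.
Lemma th_range k : (k <= n)%nat -> 0 <= th k <= PI / 2.
Proof.
  intros Hk. unfold th. pose proof hh_pos. pose proof (pos_INR k).
  split; [nra|]. rewrite <- th_n. unfold th. apply Rmult_le_compat_r; [lra|]. apply le_INR, Hk.
Qed.
Lemma th_S k : th (S k) = th k + hh.
Proof. unfold th. rewrite S_INR. ring. Qed.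

Lemma cos2_sum : rsum (S n) (fun k => cos (th k) ^ 2) = (INR n + 1) / 2.
Proof.
  set (S0 := rsum (S n) (fun k => cos (th k) ^ 2)).
  assert (E : S0 = rsum (S n) (fun k => sin (th k) ^ 2)).
  { unfold S0. rewrite rsum_rev. apply rsum_ext. intros k Hk.
    replace (S n - 1 - k)%nat with (n - k)%nat by lia.
    unfold th at 1. rewrite minus_INR by lia.
    replace ((INR n - INR k) * hh) with (PI / 2 - th k).
    - rewrite cos_shift. reflexivity.
    - rewrite <- th_n. unfold th. ring. }
  assert (E2 : S0 + S0 = INR (S n)).
  { rewrite E at 2. unfold S0. rewrite <- rsum_plus.
    rewrite (rsum_ext _ _ (fun _ => 1)). - rewrite rsum_const. ring.
    - intros k _. pose proof (sin2_cos2 (th k)). unfold Rsqr in H. lra. }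
  rewrite S_INR in E2. lra.
Qed.

Variables (c : pt) (r : R).
Hypothesis Hr : 0 < r.
Definition Pr k := Rect (fst c + r * sin (th k)) (fst c + r * sin (th (S k)))
                        (snd c - r * cos (th k)) (snd c + r * cos (th k)).
Definition Mr k := Rect (fst c - r * sin (th (S k))) (fst c - r * sin (th k))
                        (snd c - r * cos (th k)) (snd c + r * cos (th k)).

Lemma area_bound_aux x1 x2 k : (k < n)%nat ->
  x2 - x1 = r * (sin (th (S k)) - sin (th k)) ->
  Rmax 0 (x2 - x1) * Rmax 0 (snd c + r * cos (th k) - (snd c - r * cos (th k)))
  <= 2 * r ^ 2 * sin hh * cos (th k) ^ 2.
Proof.
  intros Hk Hx. rewrite Hx.
  pose proof (th_range k ltac:(lia)).
  assert (0 <= cos (th k)) by (apply cos_ge_0; lra).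
  assert (0 <= sin hh) by (apply sin_ge_0; pose proof hh_pos; pose proof hh_le; pose proof PI_RGT_0; lra).
  pose proof (trig_key (th k) hh ltac:(lra) ltac:(pose proof hh_pos; lra)).
  rewrite <- th_S in H2.
  replace (snd c + r * cos (th k) - (snd c - r * cos (th k))) with (2 * r * cos (th k)) by ring.
  rewrite (Rmax_right 0 (2 * r * cos (th k))) by nra.
  assert (A1 : r ^ 2 * (cos (th k) * (sin (th (S k)) - sin (th k))) <= r ^ 2 * (sin hh * cos (th k) ^ 2))
    by (apply Rmult_le_compat_l; [nra|exact H2]).
  assert (A2 : 0 <= r ^ 2 * (sin hh * cos (th k) ^ 2))
    by (apply Rmult_le_pos; [nra|apply Rmult_le_pos; [lra|apply pow2_ge_0]]).
  unfold Rmax. destruct (Rle_dec 0 (r * (sin (th (S k)) - sin (th k)))).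
  - replace (r * (sin (th (S k)) - sin (th k)) * (2 * r * cos (th k))) with
      (2 * (r ^ 2 * (cos (th k) * (sin (th (S k)) - sin (th k))))) by ring. lra.
  - lra.
Qed.

Lemma disk_cover_value : exists v, cover_value (disk c r) v /\ v <= PI * r ^ 2 + PI * r ^ 2 / INR n.
Proof.
  exists (rsum n (fun k => area (Pr k) + area (Mr k))). split.
  - eapply cover_value_mono; [|apply cover_value_family].
    intros p Hp. unfold disk, Defs.dist in Hp.
    set (a := fst p - fst c) in *. set (b := snd p - snd c) in *.
    assert (Hab : a ^ 2 + b ^ 2 < r ^ 2).
    { apply sqrt_lt_sq; [pose proof (pow2_ge_0 a); pose proof (pow2_ge_0 b); lra|exact Hp]. }
    assert (Hs0 : r * sin (th 0) = 0). { unfold th. simpl. rewrite Rmult_0_l, sin_0. ring. }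
    assert (Hsn : r * sin (th n) = r). { rewrite th_n, sin_PI2. ring. }
    assert (Hfind : forall x, 0 <= x -> x ^ 2 + b ^ 2 < r ^ 2 -> exists k, (k < n)%nat /\
               r * sin (th k) <= x <= r * sin (th (S k)) /\ - (r * cos (th k)) <= b <= r * cos (th k)).
    { intros x Hx Hxb.
      destruct (find_step (fun k => r * sin (th k)) x n) as [k [Hk Hs]].
      - simpl. rewrite Hs0. exact Hx.
      - simpl. rewrite Hsn. nra.
      - exists k. split; [exact Hk|]. split; [exact Hs|].
        pose proof (th_range k ltac:(lia)).
        assert (0 <= sin (th k)) by (apply sin_ge_0; lra).
        assert (0 <= cos (th k)) by (apply cos_ge_0; lra).
        pose proof (sin2_cos2 (th k)). unfold Rsqr in H2.
        assert (0 <= r * sin (th k)) by nra.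
        assert (Hx2 : (r * sin (th k)) ^ 2 <= x ^ 2) by nra.
        assert (Hid : (r * cos (th k)) ^ 2 = r ^ 2 - (r * sin (th k)) ^ 2).
        { replace (r ^ 2) with (r ^ 2 * (sin (th k) * sin (th k) + cos (th k) * cos (th k))) at 1 by (rewrite H2; ring). ring. }
        assert (b ^ 2 <= (r * cos (th k)) ^ 2) by lra.
        assert (0 <= r * cos (th k)) by nra.
        split; nra. }
    destruct (Rle_dec 0 a) as [Ha|Ha].
    + destruct (Hfind a Ha Hab) as [k [Hk [H1 H2]]]. exists k. split; [exact Hk|]. left.
      unfold in_rect, Pr; cbn [rx1 rx2 ry1 ry2]. unfold a, b in *. lra.
    + destruct (Hfind (- a) ltac:(lra) ltac:(nra)) as [k [Hk [H1 H2]]]. exists k. split; [exact Hk|]. right.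
      unfold in_rect, Mr; cbn [rx1 rx2 ry1 ry2]. unfold a, b in *. lra.
  - apply Rle_trans with (rsum n (fun k => 4 * r ^ 2 * sin hh * cos (th k) ^ 2)).
    + apply rsum_le. intros k Hk. unfold area, Pr, Mr; cbn [rx1 rx2 ry1 ry2].
      pose proof (area_bound_aux (fst c + r * sin (th k)) (fst c + r * sin (th (S k))) k Hk ltac:(ring)).
      pose proof (area_bound_aux (fst c - r * sin (th (S k))) (fst c - r * sin (th k)) k Hk ltac:(ring)).
      lra.
    + rewrite rsum_scal.
      assert (Hle : rsum n (fun k => cos (th k) ^ 2) <= (INR n + 1) / 2).
      { rewrite <- cos2_sum.
        assert (rsum (S n) (fun k => cos (th k)^2) = rsum n (fun k => cos (th k)^2) + cos (th n)^2) by reflexivity.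
        pose proof (pow2_ge_0 (cos (th n))). lra. }
      pose proof (sin_lt_x hh hh_pos). pose proof hh_pos.
      assert (0 <= sin hh) by (apply sin_ge_0; pose proof hh_le; pose proof PI_RGT_0; lra).
      assert (0 <= rsum n (fun k => cos (th k) ^ 2)) by (apply rsum_nonneg; intros; apply pow2_ge_0).
      apply Rle_trans with (4 * r ^ 2 * hh * ((INR n + 1) / 2)).
      * assert (0 <= r ^ 2) by nra.
        apply Rle_trans with (4 * r ^ 2 * sin hh * ((INR n + 1) / 2)); [|].
        -- apply Rmult_le_compat_l; [nra|exact Hle].
        -- pose proof (pos_INR n). apply Rmult_le_compat_r; [lra|]. nra.
      * unfold hh. pose proof INRn_pos. right. field. lra.
Qed.
End DiskCover.

Lemma disk_upper c r m : 0 < r -> outer_measure (disk c r) m -> m <= PI * r ^ 2.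
Proof.
  intros Hr Hm. apply Rnot_lt_le. intros Hlt.
  pose proof PI_RGT_0. assert (0 < PI * r ^ 2) by (apply Rmult_lt_0_compat; [lra|apply pow_lt; lra]).
  destruct (archimed_cor1 ((m - PI * r ^ 2) / (PI * r ^ 2))) as [n [Hn Hn0]].
  { apply Rdiv_lt_0_compat; lra. }
  destruct (disk_cover_value n ltac:(lia) c r Hr) as [v [Hv Hvb]].
  pose proof (om_le _ _ _ Hm Hv).
  assert (0 < INR n) by (apply lt_0_INR; lia).
  assert (PI * r ^ 2 / INR n < m - PI * r ^ 2).
  { unfold Rdiv. rewrite Rmult_comm.
    apply Rmult_lt_reg_r with (/ (PI * r ^ 2)). { apply Rinv_0_lt_compat; lra. }
    replace (/ INR n * (PI * r ^ 2) * / (PI * r ^ 2)) with (/ INR n) by (field; lra).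
    exact Hn. }
  lra.
Qed.

Theorem mainTheorem4
  (Om : pset) (N : nat) (Omi : nat -> pset) (m : nat -> R)
  (eta0 : R) (c : nat -> pt) (rho : nat -> R) (asym : nat -> R)
  (c1 d2 : R)
  (hN : (1 <= N)%nat)
  (hopen : is_open Om) (hbdd : is_bounded Om) (hOm1 : outer_measure Om 1)
  (hunion : forall p, Om p <-> exists i, (i < N)%nat /\ Omi i p)
  (hdisj : forall i j p, (i < N)%nat -> (j < N)%nat -> i <> j ->
              Omi i p -> Omi j p -> False)
  (hmeas : forall i, (i < N)%nat -> measurable (Omi i))
  (hm : forall i, (i < N)%nat -> outer_measure (Omi i) (m i))
  (hmpos : forall i, (i < N)%nat -> m i > 0)
  (heta0 : eta0 > 0)
  (heta0min : (exists j, (j < N)%nat /\ PI * eta0 ^ 2 = m j) /\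
              (forall i, (i < N)%nat -> PI * eta0 ^ 2 <= m i))
  (hrho : forall i, (i < N)%nat -> rho i > 0)
  (hBm : forall i, (i < N)%nat -> outer_measure (disk (c i) (rho i)) (m i))
  (hasym : forall i, (i < N)%nat -> fraenkel_asymmetry (Omi i) (asym i))
  (hBopt : forall i, (i < N)%nat ->
      outer_measure (symdiff (Omi i) (disk (c i) (rho i))) (m i * asym i))
  (hc1 : c1 > 0) (hd2 : d2 >= 0)
  (hsum : rsum N (fun i => (m i / 1) * ((m i - PI * eta0 ^ 2) / m i)) <= d2) :
  exists s,
    outer_measure
      (fun x => Om x /\
         dist_set_le x
           (fun y => exists i, (i < N)%nat /\ m i >= (1 + c1) * PI * eta0 ^ 2 /\
                               disk (c i) (rho i) y)
           (2 * eta0))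
      s /\
    s <= 9 * d2 / c1 + 9 * d2.
Proof.
  destruct heta0min as [_ hmin].
  pose proof PI_RGT_0 as HPI.
  assert (HP : 0 < PI * eta0 ^ 2) by (apply Rmult_lt_0_compat; [lra|apply pow_lt; lra]).
  set (Sset := fun x => Om x /\
         dist_set_le x
           (fun y => exists i, (i < N)%nat /\ m i >= (1 + c1) * PI * eta0 ^ 2 /\
                               disk (c i) (rho i) y)
           (2 * eta0)).
  set (w := fun i => if Rge_dec (m i) ((1 + c1) * PI * eta0 ^ 2) then m i else 0).
  set (W := rsum N w).
  assert (Hrho : forall i, (i < N)%nat -> m i >= (1 + c1) * PI * eta0 ^ 2 -> eta0 <= rho i).
  { intros i Hi HI. pose proof (disk_upper _ _ _ (hrho i Hi) (hBm i Hi)).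
    pose proof (hrho i Hi).
    assert (PI * eta0 ^ 2 <= PI * rho i ^ 2) by nra.
    assert (eta0 ^ 2 <= rho i ^ 2) by (apply Rmult_le_reg_l with PI; lra).
    nra. }
  assert (Hw0 : forall i, (i < N)%nat -> 0 <= w i).
  { intros i Hi. unfold w. destruct (Rge_dec _ _); [pose proof (hmpos i Hi); lra|lra]. }
  assert (HW0 : 0 <= W) by (apply rsum_nonneg; exact Hw0).
  assert (HWd : W <= (1 + c1) / c1 * d2).
  { apply Rle_trans with (rsum N (fun i => (1 + c1) / c1 * ((m i / 1) * ((m i - PI * eta0 ^ 2) / m i)))).
    - apply rsum_le. intros i Hi. pose proof (hmpos i Hi). pose proof (hmin i Hi).
      replace ((m i / 1) * ((m i - PI * eta0 ^ 2) / m i)) with (m i - PI * eta0 ^ 2) by (field; lra).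
      unfold w. destruct (Rge_dec _ _) as [HI|HI].
      + apply Rmult_le_reg_l with c1; [lra|].
        replace (c1 * ((1 + c1) / c1 * (m i - PI * eta0 ^ 2))) with ((1 + c1) * (m i - PI * eta0 ^ 2)) by (field; lra).
        nra.
      + assert (0 <= (1 + c1) / c1) by (apply Rle_mult_inv_pos; lra). nra.
    - rewrite rsum_scal. apply Rmult_le_compat_l; [apply Rle_mult_inv_pos; lra|exact hsum]. }
  assert (Hclaim : forall u, 0 < u <= 1 -> exists v, cover_value Sset v /\ v <= (3 + u) ^ 2 * (W + INR N * u)).
  { intros u Hu.
    set (Rad := fun i => rho i + (2 + u) * eta0).
    set (U := fun n y => exists i, (i < n)%nat /\ m i >= (1 + c1) * PI * eta0 ^ 2 /\ disk (c i) (Rad i) y).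
    assert (HU : forall n, (n <= N)%nat -> exists t, cover_value (U n) t /\ t <= rsum n (fun i => (3 + u) ^ 2 * (w i + u))).
    { induction n as [|n IH]; intros Hn.
      - exists 0. split; [|simpl; lra]. eapply cover_value_mono; [|apply cover_value_empty].
        intros y [i [Hi _]]. lia.
      - destruct (IH ltac:(lia)) as [t [Ht Htb]].
        assert (HD : exists t', cover_value (fun y => m n >= (1 + c1) * PI * eta0 ^ 2 /\ disk (c n) (Rad n) y) t'
                               /\ t' <= (3 + u) ^ 2 * (w n + u)).
        { unfold w. destruct (Rge_dec (m n) ((1 + c1) * PI * eta0 ^ 2)) as [HI|HI].
          - assert (Hn' : (n < N)%nat) by lia.
            destruct (hBm n Hn') as [_ Hinf]. destruct (Hinf u ltac:(lra)) as [s0 [Hs0 Hs0b]].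
            pose proof (hrho n Hn') as Hr. pose proof (Hrho n Hn' HI) as Hre.
            set (k := Rad n / rho n).
            assert (Hk : 0 < k) by (unfold k, Rad; apply Rdiv_lt_0_compat; nra).
            assert (Hk3 : k <= 3 + u).
            { unfold k, Rad. apply Rmult_le_reg_r with (rho n); [lra|].
              replace ((rho n + (2 + u) * eta0) / rho n * rho n) with (rho n + (2 + u) * eta0) by (field; lra).
              nra. }
            pose proof (cover_value_scale _ _ _ _ Hk Hs0) as Hsc.
            replace (k * rho n) with (Rad n) in Hsc by (unfold k; field; lra).
            exists (k ^ 2 * s0). split.
            + eapply cover_value_mono; [|exact Hsc]. intros y [_ Hy]. exact Hy.
            + pose proof (cover_value_nonneg _ _ Hs0).
              assert (k ^ 2 <= (3 + u) ^ 2) by nra.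
              assert (k ^ 2 * s0 <= (3 + u) ^ 2 * s0) by nra.
              assert ((3 + u) ^ 2 * s0 <= (3 + u) ^ 2 * (m n + u)) by (apply Rmult_le_compat_l; nra).
              lra.
          - exists 0. split.
            + eapply cover_value_mono; [|apply cover_value_empty]. intros y [Hy _]. exact (HI Hy).
            + nra. }
        destruct HD as [t' [Ht' Ht'b]].
        exists (t + t'). split.
        + eapply cover_value_mono; [|exact (cover_value_union _ _ _ _ Ht Ht')].
          intros y [i [Hi [HI Hy]]]. destruct (Nat.eq_dec i n) as [->|Hne].
          * right. split; assumption.
          * left. exists i. split; [lia|split; assumption].
        + change (rsum (S n) (fun i => (3 + u) ^ 2 * (w i + u))) with
            (rsum n (fun i => (3 + u) ^ 2 * (w i + u)) + (3 + u) ^ 2 * (w n + u)). lra. }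
    destruct (HU N (le_n N)) as [t [Ht Htb]].
    exists t. split.
    - eapply cover_value_mono; [|exact Ht].
      intros x [Hx Hd]. destruct (Hd (u * eta0) ltac:(nra)) as [y [[i [Hi [HI Hy]]] Hxy]].
      exists i. split; [exact Hi|]. split; [exact HI|].
      unfold disk in *. pose proof (dist_triangle x y (c i)). unfold Rad. lra.
    - rewrite rsum_scal, rsum_plus, rsum_const in Htb. fold W in Htb. lra. }
  destruct (Hclaim 1 ltac:(lra)) as [v1 [Hv1 _]].
  destruct (om_exists _ _ Hv1) as [s Hs].
  exists s. split; [exact Hs|].
  assert (Hs9 : s <= 9 * W).
  { apply Rnot_lt_le. intros Hlt.
    set (K := 7 * W + 16 * INR N + 1).
    assert (HK : 0 < K) by (unfold K; pose proof (pos_INR N); lra).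
    set (u := Rmin 1 ((s - 9 * W) / (2 * K))).
    assert (Hu0 : 0 < u) by (unfold u; apply Rmin_pos; [lra|apply Rdiv_lt_0_compat; lra]).
    assert (Hu1 : u <= 1) by (unfold u; apply Rmin_l).
    assert (Hu2 : u * K <= (s - 9 * W) / 2).
    { unfold u. pose proof (Rmin_r 1 ((s - 9 * W) / (2 * K))).
      apply Rle_trans with ((s - 9 * W) / (2 * K) * K).
      - apply Rmult_le_compat_r; lra.
      - right. field. lra. }
    destruct (Hclaim u ltac:(lra)) as [v [Hv Hvb]].
    pose proof (om_le _ _ _ Hs Hv).
    pose proof (pos_INR N).
    assert ((3 + u) ^ 2 <= 9 + 7 * u) by nra.
    assert (0 <= W + INR N * u) by nra.
    assert ((3 + u) ^ 2 * (W + INR N * u) <= (9 + 7 * u) * (W + INR N * u)) by (apply Rmult_le_compat_r; lra).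
    assert (INR N * u * u <= INR N * u) by nra.
    assert ((9 + 7 * u) * (W + INR N * u) <= 9 * W + u * (7 * W + 16 * INR N)) by nra.
    unfold K in Hu2. nra. }
  assert (9 * W <= 9 * ((1 + c1) / c1 * d2)) by lra.
  replace (9 * d2 / c1 + 9 * d2) with (9 * ((1 + c1) / c1 * d2)) by (field; lra).
  lra.
Qed.
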